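(* Let $Q$ be a right Leibniz algebra and $L$ a subalgebra of $Q$. (1) If $\mathrm{Ann}(L)=\{0\}$, then $L$ is an algebra of quotients of itself. (2) If $Q$ is an algebra of quotients of $L$, then $\mathrm{Ann}_Q(L)=\mathrm{Ann}(L)=\{0\}$.
   Context: A right Leibniz algebra satisfies $[x,[y,z]]=[[x,y],z]-[[x,z],y]$. $\mathrm{Ann}_Q(L)=\{q\in Q:[q,x]=[x,q]=0\ \forall x\in L\}$ and $\mathrm{Ann}(L)=\{x\in L:[x,y]=[y,x]=0\ \forall y\in L\}$. For $x\in L$, $R_x(u)=[u,x]$, $L_x(u)=[x,u]$ on $Q$, $\mathscr{A}(L)$ the associative algebra they generate, ${}_L(q)=\mathbb{F}q+\{\sum\xi_i(q):\xi_i\in\mathscr{A}(L)\}$, $(L:q)=\{x\in L:[x,{}_L(q)]\subseteq L,[{}_L(q),x]\subseteq L\}$. $Q$ is an algebra of quotients of $L$ if for all $p,q\in Q$ with $p\ne0$ there is $x\in(L:q)$ with $[x,p]\ne0$ or $y\in(L:q)$ with $[p,y]\ne0$. *)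

(* Defs.v *)
From mathcomp Require Import all_boot all_algebra.
Set Implicit Arguments. Unset Strict Implicit. Unset Printing Implicit Defensive.
Import GRing.Theory.
Local Open Scope ring_scope.

(* list membership for types without decidable equality *)
Fixpoint inseq (T : Type) (x : T) (s : seq T) : Prop :=
  if s is y :: s' then y = x \/ inseq x s' else False.

Section Leibniz.
Variables (F : fieldType) (Q : lmodType F) (br : Q -> Q -> Q).

Definition bilinear_br : Prop :=
  (forall a x y z, br (a *: x + y) z = a *: br x z + br y z) /\
  (forall a x y z, br x (a *: y + z) = a *: br x y + br x z).

Definition right_leibniz : Prop :=
  forall x y z, br x (br y z) = br (br x y) z - br (br x z) y.

Definition right_leibniz_algebra : Prop := bilinear_br /\ right_leibniz.

Definition subalgebra (L : Q -> Prop) : Prop :=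
  [/\ L 0, (forall a x y, L x -> L y -> L (a *: x + y))
    & (forall x y, L x -> L y -> L (br x y))].

(* A(L): the (non-unital) associative algebra of maps Q -> Q generated by
   the R_x : u |-> [u,x] and L_x : u |-> [x,u], x in L *)
Inductive multAlg (L : Q -> Prop) : (Q -> Q) -> Prop :=
  | mA_R x : L x -> multAlg L (fun u => br u x)
  | mA_L x : L x -> multAlg L (fun u => br x u)
  | mA_add f g : multAlg L f -> multAlg L g -> multAlg L (fun u => f u + g u)
  | mA_scale (a : F) f : multAlg L f -> multAlg L (fun u => a *: f u)
  | mA_comp f g : multAlg L f -> multAlg L g -> multAlg L (fun u => f (g u)).

Definition idealL (L : Q -> Prop) (q : Q) : Q -> Prop :=
  fun y => exists (a : F) (s : seq (Q -> Q)),
    (forall xi, inseq xi s -> multAlg L xi) /\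
    y = a *: q + \sum_(xi <- s) xi q.

Definition colon (L : Q -> Prop) (q : Q) : Q -> Prop :=
  fun x => L x /\ forall y, idealL L q y -> L (br x y) /\ L (br y x).

(* M (a subalgebra of Q containing L, taken as ambient algebra)
   is an algebra of quotients of L *)
Definition algebra_of_quotients_in (M L : Q -> Prop) : Prop :=
  forall p q, M p -> M q -> p <> 0 ->
    (exists x, colon L q x /\ br x p <> 0) \/
    (exists y, colon L q y /\ br p y <> 0).

Definition algebra_of_quotients (L : Q -> Prop) : Prop :=
  algebra_of_quotients_in (fun _ => True) L.

Definition AnnQ (L : Q -> Prop) : Q -> Prop :=
  fun q => forall x, L x -> br q x = 0 /\ br x q = 0.

Definition Ann (L : Q -> Prop) : Q -> Prop :=
  fun x => L x /\ forall y, L y -> br x y = 0 /\ br y x = 0.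

End Leibniz.

(* Main.v *)
Require Import Defs.
From mathcomp Require Import all_boot all_algebra.
From Stdlib Require Import Classical.
Local Open Scope ring_scope.
Import GRing.Theory.

Section Aux.
Variables (F : fieldType) (Q : lmodType F) (br : Q -> Q -> Q).

Lemma br0l (hQ : right_leibniz_algebra br) z : br 0 z = 0.
Proof.
case: hQ => [[h1 _] _]; have := h1 1 0 0 z.
rewrite !scale1r addr0 => h; apply: (@addrI _ (br 0 z)); rewrite addr0 -{1}h; done.
Qed.

Lemma br0r (hQ : right_leibniz_algebra br) z : br z 0 = 0.
Proof.
case: hQ => [[_ h2] _]; have := h2 1 z 0 0.
rewrite !scale1r addr0 => h; apply: (@addrI _ (br z 0)); rewrite addr0 -{1}h; done.
Qed.

Lemma sub_add (L : Q -> Prop) (hL : subalgebra br L) x y : L x -> L y -> L (x + y).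
Proof. case: hL => _ h _ hx hy; have := h 1 x y hx hy; by rewrite scale1r. Qed.

Lemma sub_scale (L : Q -> Prop) (hL : subalgebra br L) a x : L x -> L (a *: x).
Proof. case: hL => h0 h _ hx; have := h a x 0 hx h0; by rewrite addr0. Qed.

Lemma multAlg_closed (L : Q -> Prop) (hL : subalgebra br L) f :
  multAlg br L f -> forall u, L u -> L (f u).
Proof.
have [_ _ hb] := hL.
elim => [x hx u hu|x hx u hu|f1 g _ IH1 _ IH2 u hu|a f1 _ IH u hu|f1 g _ IH1 _ IH2 u hu].
- by apply: hb.
- by apply: hb.
- by apply: sub_add => //; [apply: IH1|apply: IH2].
- by apply: sub_scale => //; apply: IH.
- by apply: IH1; apply: IH2.
Qed.

Lemma idealL_sub (L : Q -> Prop) (hL : subalgebra br L) q :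
  L q -> forall y, idealL br L q y -> L y.
Proof.
move=> hq y [a [s [hs ->]]].
apply: sub_add => //; first by apply: sub_scale.
elim: s hs => [|xi s IH] hs; first by rewrite big_nil; case: hL.
rewrite big_cons; apply: sub_add => //.
- exact: (multAlg_closed L hL xi (hs xi (or_introl erefl)) q hq).
- by apply: IH => z hz; apply: hs; right.
Qed.
End Aux.

Theorem proposition3p3 (F : fieldType) (Q : lmodType F) (br : Q -> Q -> Q)
  (hQ : right_leibniz_algebra br) (L : Q -> Prop) (hL : subalgebra br L) :
  ((forall x, Ann br L x <-> x = 0) -> algebra_of_quotients_in br L L) /\
  (algebra_of_quotients br L ->
     (forall q, AnnQ br L q <-> q = 0) /\ (forall x, Ann br L x <-> x = 0)).
Proof.
have [hL0 _ hb] := hL.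
split.
- move=> hA p q hp hq hp0.
  have hcol : forall y, L y -> colon br L q y.
    move=> y hy; split => // z hz.
    have hz' := @idealL_sub F Q br L hL q hq z hz.
    by split; apply: hb.
  apply: NNPP => hn; apply: hp0; apply/hA; split => // y hy.
  split.
  + apply: NNPP => h; apply: hn; right; exists y; split => //; exact: hcol.
  + apply: NNPP => h; apply: hn; left; exists y; split => //; exact: hcol.
- move=> hQt.
  have hAQ : forall q, AnnQ br L q <-> q = 0.
    move=> q; split.
    + move=> hq; case: (eqVneq q 0) => // hne.
      case: (hQt q q I I (fun e => negP hne (introT eqP e))) => [[x [[hx _] hxq]]|[y [[hy _] hqy]]].
      * by case: (hq x hx) => _ /hxq.
      * by case: (hq y hy) => /hqy.
    + by move=> -> x _; rewrite br0l // br0r.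
  split => // x; split.
  + by move=> [_ h]; apply/hAQ => y hy; apply: h.
  + by move=> ->; split => // y _; rewrite br0l // br0r.
Qed.
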